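(* Let $l\geq1$ be an integer, and in the dihedral group $D_{2l}=\langle a,b\mid a^2=b^2=(ab)^{2l}=1\rangle$ let $Y_t=a^{\epsilon_1}b^{\epsilon_2}a^{\epsilon_3}b^{\epsilon_4}\cdots$ be the alternating product of $t$ factors (the last factor is $a^{\epsilon_t}$ if $t$ is odd and $b^{\epsilon_t}$ if $t$ is even), where the $\epsilon_i$ are independent and uniform in $\{0,1\}$. Let $p_t(x)=\mathbb{P}(d(Y_t,\{e,a\})=x)$, where $d$ is the distance in the Cayley graph of $D_{2l}$ with respect to $\{a,b\}$. Then for each integer $t\geq0$, the sequence $(p_t(0),p_t(1),\dots,p_t(l-1))$ is non-increasing. *)

(* Defs.v *)
From mathcomp Require Import all_boot all_order all_algebra.
Set Implicit Arguments. Unset Strict Implicit. Unset Printing Implicit Defensive.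
Import Order.TTheory GRing.Theory Num.Theory.

(* Concrete model of the dihedral group D_{2l} = <a,b | a^2=b^2=(ab)^{2l}=1>
   (order 4l): elements r^k s^f encoded as pairs (k, f) with k < 2l,
   where r = ab is a rotation of order 2l and s = a is a reflection. *)
Definition delt := (nat * bool)%type.

Definition dmul (l : nat) (g h : delt) : delt :=
  let n := (2 * l)%N in
  (((if g.2 then g.1 + (n - h.1 %% n) else g.1 + h.1) %% n)%N, g.2 (+) h.2).

Definition de : delt := (0%N, false).
Definition da : delt := (0%N, true).
Definition db (l : nat) : delt := (((2 * l).-1)%N, true).  (* b = s r = r^{-1} s *)

(* generator used for the (i+1)-th factor (i 0-indexed): a if i even, b if odd *)
Definition dgen (l i : nat) : delt := if odd i then db l else da.

Fixpoint Yw (l i : nat) (s : seq bool) (g : delt) : delt :=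
  match s with
  | [::] => g
  | e :: s' => Yw l i.+1 s' (if e then dmul l g (dgen l i) else g)
  end.
Definition Y (l : nat) (s : seq bool) : delt := Yw l 0 s de.

Fixpoint ball (l n : nat) : seq delt :=
  match n with
  | 0 => [:: de; da]
  | n'.+1 => let S := ball l n' in
             undup (S ++ [seq dmul l g x | g <- S, x <- [:: da; db l]])
  end.

(* Cayley-graph distance d(g, {e,a}): the least n with g in ball l n.
   The graph has 4l vertices, so n ranges over 0 .. 4l suffice. *)
Definition dist (l : nat) (g : delt) : nat :=
  find (fun n => g \in ball l n) (iota 0 (4 * l).+1).

Definition pt (l t x : nat) : rat :=
  (#|[set s : t.-tuple bool | dist l (Y l s) == x]|)%:R / (2 ^ t)%:R.

(* Main.v *)
Require Import Defs.
From mathcomp Require Import all_boot all_order all_algebra zify.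
Import Order.TTheory GRing.Theory Num.Theory.

Definition valid (l : nat) (g : delt) : bool := (g.1 < 2 * l)%N.
Definition Dp (l p : nat) : nat :=
  if (p <= 1)%N then 0%N else if (p <= 2 * l)%N then p.-1 else (4 * l - p)%N.
Definition Dg (l : nat) (g : delt) : nat := Dp l (2 * g.1 + g.2)%N.
Definition sigA (l d : nat) : nat :=
  if d == 0%N then 0%N else if (d %% 2 == 1)%N then (if d == (2 * l).-1 then d else d.+1) else d.-1.
Definition sigB (d : nat) : nat := if (d %% 2 == 1)%N then d.-1 else d.+1.
Definition sig (l t d : nat) : nat := if odd t then sigB d else sigA l d.

Ltac splitif := repeat match goal with |- context[if ?b then _ else _] =>
  lazymatch b with context[if _ then _ else _] => fail | _ => let H := fresh "H" in destruct b eqn:H end end.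

Lemma mulA l g : valid l g -> dmul l g da = (g.1, ~~ g.2).
Proof.
case: g => k f; rewrite /valid /dmul /= => Hk.
rewrite mod0n subn0 addbT; case: f => /=.
- by rewrite modnDr modn_small.
- by rewrite addn0 modn_small.
Qed.

Lemma modsm l k : (1 <= l)%N -> (k < 2 * l)%N -> ((k.+1) %% (2 * l) = if k.+1 == 2 * l then 0 else k.+1)%N.
Proof. move=> hl hk; case: eqP => [->|ne]; first by rewrite modnn. rewrite modn_small //; lia. Qed.

Lemma modpr l k : (1 <= l)%N -> (k < 2 * l)%N -> ((k + (2 * l).-1) %% (2 * l) = if k == 0 then (2 * l).-1 else k.-1)%N.
Proof. move=> hl hk; case: eqP => [->|ne].
- rewrite add0n modn_small //; lia.
- have -> : (k + (2 * l).-1 = k.-1 + 2 * l)%N by lia.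
  rewrite modnDr modn_small //; lia.
Qed.

Lemma mulB l g : (1 <= l)%N -> valid l g -> dmul l g (db l) =
  (if g.2 then (if g.1.+1 == 2 * l then 0 else g.1.+1) else (if g.1 == 0 then (2 * l).-1 else g.1.-1), ~~ g.2)%N.
Proof.
case: g => k f; rewrite /valid /dmul /= => hl Hk.
rewrite addbT (@modn_small (2 * l).-1); last by lia.
case: f => /=.
- have -> : (k + (2 * l - (2 * l).-1) = k.+1)%N by lia. by rewrite modsm.
- by rewrite modpr.
Qed.

Lemma dmul_valid l g h : (1 <= l)%N -> valid l (dmul l g h).
Proof. move=> hl; rewrite /valid /dmul /= ltn_pmod //; lia. Qed.

Lemma Dg_mul l t g : (1 <= l)%N -> valid l g -> Dg l (dmul l g (dgen l t)) = sig l t (Dg l g).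
Proof.
move=> hl hg; rewrite /dgen /sig; case: (odd t).
- rewrite mulB //; move: hg; case: g => k f; rewrite /valid /Dg /Dp /sigB /=; case: f => /= hk;
  splitif; lia.
- rewrite mulA //; move: hg; case: g => k f; rewrite /valid /Dg /Dp /sigA /=; case: f => /= hk;
  splitif; lia.
Qed.

Lemma Dg_range l g : (1 <= l)%N -> valid l g -> (Dg l g <= (2 * l).-1)%N.
Proof. move=> hl; case: g => k f; rewrite /valid /Dg /Dp /=; case: f => /= hk; splitif; lia. Qed.

Lemma Dg_zero l g : (1 <= l)%N -> valid l g -> (Dg l g <= 0)%N = (g.1 == 0)%N.
Proof. move=> hl; case: g => k f; rewrite /valid /Dg /Dp /=; case: f => /= hk; splitif; lia. Qed.

Lemma invA l g : valid l g -> dmul l (dmul l g da) da = g.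
Proof. case: g => k f hg; by rewrite mulA // mulA //= negbK. Qed.

Lemma invB l g : (1 <= l)%N -> valid l g -> dmul l (dmul l g (db l)) (db l) = g.
Proof.
move=> hl hg; rewrite [dmul l (dmul _ _ _) _]mulB ?dmul_valid // mulB //.
move: hg; case: g => k f; rewrite /valid /=; case: f => /= hk; congr pair; splitif; lia.
Qed.

Lemma ball_valid l n : (1 <= l)%N -> all (valid l) (ball l n).
Proof.
move=> hl; elim: n => [|n IH] /=; first by rewrite /valid /=; lia.
apply/allP => g; rewrite mem_undup mem_cat => /orP [/(allP IH) //|].
by case/flatten_mapP => h _; rewrite !inE => /orP [] /eqP ->; apply: dmul_valid.
Qed.

Lemma sig_le l d : (sigA l d <= d.+1)%N /\ (sigB d <= d.+1)%N.
Proof. rewrite /sigA /sigB; split; splitif; lia. Qed.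

Lemma sig_dec l d : (0 < d)%N -> (d <= (2 * l).-1)%N -> sigA l d = d.-1 \/ sigB d = d.-1.
Proof. rewrite /sigA /sigB => h1 h2; splitif; lia. Qed.

Lemma ball_spec l n g : (1 <= l)%N -> valid l g -> (g \in ball l n) = (Dg l g <= n)%N.
Proof.
move=> hl; elim: n g => [|n IH] g hg.
  rewrite Dg_zero // /= !inE /de /da; case: g hg => k f /= _.
  by case: f; rewrite /eq_op /= ?andbT ?andbF ?orbF.
have hv := ball_valid l n hl.
rewrite /= mem_undup mem_cat; apply/idP/idP.
- case/orP => [|/flatten_mapP [h hh]] /=; first by rewrite IH //; lia.
  have hvh : valid l h by exact: (allP hv).
  move: hh; rewrite IH // => hh.
  rewrite !inE => /orP [] /eqP ->.
  + have := Dg_mul l 0 _ hl hvh; rewrite /dgen /= => ->; rewrite /sig /=. have [] := sig_le l (Dg l h). lia.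
  + have := Dg_mul l 1 _ hl hvh; rewrite /dgen /= => ->; rewrite /sig /=. have [] := sig_le l (Dg l h). lia.
- move=> hD. case: (leqP (Dg l g) n) => hn; first by rewrite IH // hn.
  apply/orP; right; apply/flatten_mapP.
  have := sig_dec l (Dg l g); have := Dg_range l g hl hg. move=> r /(_ ltac:(lia) r) [hs|hs].
  + exists (dmul l g da); last by rewrite in_cons invA // eqxx.
    rewrite IH ?dmul_valid //. have := Dg_mul l 0 _ hl hg; rewrite /dgen /= => ->. rewrite /sig /= hs. lia.
  + exists (dmul l g (db l)); last by rewrite !inE invB // eqxx orbT.
    rewrite IH ?dmul_valid //. have := Dg_mul l 1 _ hl hg; rewrite /dgen /= => ->. rewrite /sig /= hs. lia.
Qed.

Lemma find_ge m i N : (i <= m)%N -> (m < i + N)%N -> find (fun n => m <= n)%N (iota i N) = (m - i)%N.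
Proof.
elim: N i => [|N IH] i h1 h2; first lia.
rewrite /= ; case: leqP => h3; first lia.
rewrite IH //; lia.
Qed.

Lemma dist_D l g : (1 <= l)%N -> valid l g -> dist l g = Dg l g.
Proof.
move=> hl hg; rewrite /dist (eq_find (a2 := fun n => Dg l g <= n)%N).
  rewrite find_ge ?subn0 //. have := Dg_range l g hl hg; lia.
by move=> n; rewrite ball_spec.
Qed.

Lemma Yw_rcons l i s e g : Yw l i (rcons s e) g =
  (if e then dmul l (Yw l i s g) (dgen l (i + size s)) else Yw l i s g).
Proof. elim: s i g => [|x s IH] i g /=; first by rewrite addn0. by rewrite IH addSnnS. Qed.

Lemma Yw_valid l i s g : (1 <= l)%N -> valid l g -> valid l (Yw l i s g).
Proof.
move=> hl; elim: s i g => [|x s IH] i g hg //=; apply: IH; case: x => //; exact: dmul_valid.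
Qed.

Fixpoint Sq (t : nat) : seq (seq bool) :=
  match t with 0 => [:: [::]] | t'.+1 => map (rcons^~ false) (Sq t') ++ map (rcons^~ true) (Sq t') end.

Lemma mem_Sq t s : (s \in Sq t) = (size s == t).
Proof.
elim: t s => [|t IH] s /=; first by rewrite inE size_eq0.
case/lastP: s => [|s e]; rewrite mem_cat.
  by apply/negbTE; apply/norP; split; apply/negP => /mapP [x _] /(congr1 size); rewrite size_rcons.
have F : forall b b' u, (rcons u b \in map (rcons^~ b') (Sq t)) = (b == b') && (u \in Sq t).
  move=> b b' u; apply/mapP/andP => [[x hx /rcons_inj [-> ->]]|[/eqP -> hu]]; first by rewrite eqxx.
  by exists u.
by rewrite size_rcons eqSS -IH !F; case: e; rewrite ?andbF ?orbF.
Qed.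

Lemma uniq_Sq t : uniq (Sq t).
Proof.
elim: t => [|t IH] //=; rewrite cat_uniq !map_inj_uniq ?IH //=; try exact: rcons_injl.
rewrite andbT; apply/hasPn => s /mapP [x _ ->]; apply/mapP => [[y _ /rcons_inj []]] //.
Qed.

Lemma card_S t (P : pred (seq bool)) : #|[set s : t.-tuple bool | P s]| = count P (Sq t).
Proof.
have -> : #|[set s : t.-tuple bool | P s]| = count P (map val (enum {: t.-tuple bool})).
  rewrite cardsE cardE /enum_mem size_filter count_map count_filter.
  apply: eq_count => s. by rewrite !inE /= andbT.
apply/permP; apply: uniq_perm.
- rewrite map_inj_uniq ?enum_uniq //. exact: val_inj.
- exact: uniq_Sq.
move=> s; rewrite mem_Sq; apply/mapP/idP => [[x _ ->]|/eqP H]; first by rewrite size_tuple.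
have Hs : size s == t by rewrite H. by exists (Tuple Hs); rewrite ?mem_enum.
Qed.

Definition c l t x := count (fun s => dist l (Y l s) == x) (Sq t).

Lemma sig_range l t d : (1 <= l)%N -> (d <= (2 * l).-1)%N -> (sig l t d <= (2 * l).-1)%N.
Proof. rewrite /sig /sigA /sigB => h1 h2; case: odd; splitif; lia. Qed.

Lemma sig_eq l t d x : (1 <= l)%N -> (d <= (2 * l).-1)%N -> (x <= (2 * l).-1)%N ->
  (sig l t d == x) = (d == sig l t x).
Proof. rewrite /sig /sigA /sigB => h1 h2 h3; case: odd; splitif; lia. Qed.

Lemma c_rec l t x : (1 <= l)%N -> (x <= (2 * l).-1)%N -> c l t.+1 x = (c l t x + c l t (sig l t x))%N.
Proof.
move=> hl hx; rewrite /c /= count_cat !count_map; congr addn.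
- by apply: eq_count => s /=; rewrite /Y Yw_rcons.
apply: eq_in_count => s; rewrite mem_Sq => /eqP hs /=.
have hv : valid l (Y l s) by apply: Yw_valid => //; rewrite /valid /=; lia.
rewrite /Y Yw_rcons add0n hs -/(Y l s) !dist_D ?dmul_valid // Dg_mul //.
by rewrite sig_eq // Dg_range.
Qed.

Lemma c_mono l t : (1 <= l)%N -> forall x, (x < (2 * l).-1)%N -> (c l t x.+1 <= c l t x)%N.
Proof.
move=> hl; elim: t => [|t IH] x hx.
  rewrite /c /= /Y /= dist_D // /valid /=; lia.
have mono : forall i j, (i <= j)%N -> (j <= (2 * l).-1)%N -> (c l t j <= c l t i)%N.
  move=> i j hij hj; elim: j hij hj => [|j IHj] hij hj; first by have -> : i = 0%N by lia.
  case: (ltnP i j.+1) => h; last by have -> : i = j.+1 by lia.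
  apply: leq_trans (IH j _) (IHj _ _); lia.
rewrite !c_rec //; try lia.
have : (sig l t x == x.+1) && (sig l t x.+1 == x) ||
       (sig l t x <= sig l t x.+1)%N && (sig l t x.+1 <= (2 * l).-1)%N.
  rewrite /sig /sigA /sigB; case: odd; splitif; lia.
case/orP => /andP [h1 h2]; first by rewrite (eqP h1) (eqP h2) addnC.
apply: leq_add; [exact: IH | apply: mono => //].
Qed.

Theorem fact3p3 (l : nat) (hl : (1 <= l)%N) (t x : nat) (hx : (x.+1 <= l.-1)%N) :
  (pt l t x.+1 <= pt l t x)%R.
Proof.
rewrite /pt (card_S t (fun s => dist l (Y l s) == x.+1)) (card_S t (fun s => dist l (Y l s) == x)).
apply: ler_wpM2r; first by rewrite invr_ge0 ler0n.
rewrite ler_nat. have h : (x < (2 * l).-1)%N by lia. exact: (c_mono l t hl x h).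
Qed.
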